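(* For a $G$-space $X$, $\mathrm{cat}^{G,\infty}(X)=0$ if and only if $\mathrm{TC}^{G,\infty}(X)=0$.
   Context: All spaces are well-pointed CW complexes, $G$ a topological group acting cellularly; $x_0\in X$ is the base point. $PX$ is the path space; $\mathcal{P}_k(X)=\{(\gamma_1,\dots,\gamma_k)\in(PX)^k\mid G\gamma_i(1)=G\gamma_{i+1}(0),\ 1\le i\le k-1\}$, $\pi_k(\gamma_1,\dots,\gamma_k)=(\gamma_1(0),\gamma_k(1))\in X\times X$. $\mathrm{secat}$ is the reduced sectional category (least $n$ such that the base is covered by $n+1$ open sets each admitting a homotopy section). $\mathrm{TC}^{G,k}(X)=\mathrm{secat}(\pi_k)$, $\mathrm{TC}^{G,\infty}(X)=\min_k\mathrm{TC}^{G,k}(X)$. $P^k_*(X)=\{(\gamma_1,\dots,\gamma_k)\in\mathcal{P}_k(X)\mid\gamma_1(0)=x_0\}$, $q_k(\gamma_1,\dots,\gamma_k)=\gamma_k(1)$, $\mathrm{cat}^{G,k}(X)=\mathrm{secat}(q_k)$, $\mathrm{cat}^{G,\infty}(X)=\min_k\mathrm{cat}^{G,k}(X)$. *)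

(* Defs.v *)
From HB Require Import structures.
From mathcomp Require Import all_boot all_order all_algebra.
From mathcomp Require Import all_classical all_reals.
From mathcomp Require Import topology.
From mathcomp Require Import Rstruct Rstruct_topology.
From Stdlib Require Import Rdefinitions.

Set Implicit Arguments.
Unset Strict Implicit.
Unset Printing Implicit Defensive.

Import Order.TTheory GRing.Theory Num.Theory.
Local Open Scope classical_set_scope.
Local Open Scope ring_scope.

Definition I01 : Type := set_type (`[0%R, 1%R]%classic : set R).

Lemma zero_in_I01 : (0%R : R) \in (`[0%R, 1%R]%classic : set R).
Proof. by rewrite inE /= in_itv /= lexx ler01. Qed.
Lemma one_in_I01 : (1%R : R) \in (`[0%R, 1%R]%classic : set R).
Proof. by rewrite inE /= in_itv /= lexx ler01. Qed.

Definition i0 : I01 := exist _ 0%R zero_in_I01.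
Definition i1 : I01 := exist _ 1%R one_in_I01.

Record Gspace (G X : topologicalType) := {
  gmul : G -> G -> G;
  ginv : G -> G;
  gone : G;
  act  : G -> X -> X;
  gmulA : forall a b c, gmul a (gmul b c) = gmul (gmul a b) c;
  gmul1 : forall a, gmul gone a = a /\ gmul a gone = a;
  gmulV : forall a, gmul (ginv a) a = gone /\ gmul a (ginv a) = gone;
  gmul_cont : continuous (fun p : G * G => gmul p.1 p.2);
  ginv_cont : continuous ginv;
  act1 : forall x, act gone x = x;
  actM : forall a b x, act (gmul a b) x = act a (act b x);
  act_cont : continuous (fun p : G * X => act p.1 p.2)
}.

Definition same_orbit (G X : topologicalType) (A : Gspace G X) (a b : X) :=
  exists g : G, act A g a = b.

(** The ambient function space of the path space P X, with the compact-open
    topology; P X is the subspace of its continuous elements. *)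
Definition PathAmb (X : topologicalType) := {compact-open, I01 -> X}.
Definition is_path (X : topologicalType) (f : PathAmb X) :=
  continuous (f : I01 -> X).

(** P_k(X) as a subset of (P X)^k  (tuples indexed by 'I_k, k >= 1). *)
Definition Pk (G X : topologicalType) (A : Gspace G X) (k : nat)
    (g : 'I_k.+1 -> PathAmb X) : Prop :=
  (forall i, is_path (g i)) /\
  (forall i : 'I_k,
      same_orbit A ((g (widen_ord (leqnSn k) i) : I01 -> X) i1)
                   ((g (lift ord0 i) : I01 -> X) i0)).

Definition pik (X : topologicalType) (k : nat) (g : 'I_k.+1 -> PathAmb X)
  : X * X := ((g ord0 : I01 -> X) i0, (g ord_max : I01 -> X) i1).
Definition qk (X : topologicalType) (k : nat) (g : 'I_k.+1 -> PathAmb X)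
  : X := (g ord_max : I01 -> X) i1.

(** Continuity of a map into
    the subspace E of the product is continuity of every component. *)
Definition hsection (X B : topologicalType) (k : nat)
    (E : set ('I_k.+1 -> PathAmb X)) (p : ('I_k.+1 -> PathAmb X) -> B)
    (U : set B) : Prop :=
  exists s : B -> 'I_k.+1 -> PathAmb X,
    (forall i, {within U, continuous (fun b => s b i)}) /\
    (forall b, U b -> E (s b)) /\
    exists H : B * I01 -> B,
      {within U `*` [set: I01], continuous H} /\
      (forall b, U b -> H (b, i0) = p (s b) /\ H (b, i1) = b).

Definition secat_le (X B : topologicalType) (k : nat)
    (E : set ('I_k.+1 -> PathAmb X)) (p : ('I_k.+1 -> PathAmb X) -> B)
    (n : nat) : Prop :=
  exists V : 'I_n.+1 -> set B,
    (forall j, open (V j)) /\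
    (forall b, exists j, V j b) /\
    (forall j, hsection E p (V j)).

Definition secat_is (X B : topologicalType) (k : nat)
    (E : set ('I_k.+1 -> PathAmb X)) (p : ('I_k.+1 -> PathAmb X) -> B)
    (n : nat) : Prop :=
  secat_le E p n /\ (forall m, secat_le E p m -> leq n m).

(** TC^{G,k}(X) = n, for k = k'.+1 >= 1 *)
Definition TCk_is (G X : topologicalType) (A : Gspace G X) (k' n : nat) :=
  secat_is (@Pk G X A k') (@pik X k') n.

Definition Pk_star (G X : topologicalType) (A : Gspace G X) (x0 : X)
    (k : nat) : set ('I_k.+1 -> PathAmb X) :=
  [set g | Pk A g /\ (g ord0 : I01 -> X) i0 = x0].

Definition catk_is (G X : topologicalType) (A : Gspace G X) (x0 : X)
    (k' n : nat) :=
  secat_is (@Pk_star G X A x0 k') (@qk X k') n.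

Definition TCinf_is (G X : topologicalType) (A : Gspace G X) (n : nat) :=
  (exists k', TCk_is A k' n) /\
  (forall k' m, TCk_is A k' m -> leq n m).

Definition catinf_is (G X : topologicalType) (A : Gspace G X) (x0 : X)
    (n : nat) :=
  (exists k', catk_is A x0 k' n) /\
  (forall k' m, catk_is A x0 k' m -> leq n m).

(* Main.v *)
Require Import Defs.
From mathcomp Require Import all_boot all_order all_algebra all_classical all_reals topology.
From mathcomp Require Import Rstruct Rstruct_topology normedtype zify.
From Stdlib Require Import Rdefinitions.
Set Implicit Arguments.
Unset Strict Implicit.
Import Order.TTheory GRing.Theory Num.Theory.
Local Open Scope classical_set_scope.
Local Open Scope ring_scope.

Lemma curry_path (B X : topologicalType) (F : B * I01 -> X) : continuous F ->
  continuous (fun b => (fun t => F (b,t)) : PathAmb X) /\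
  forall b, is_path ((fun t => F (b,t)) : PathAmb X).
Proof.
move=> cF.
have := @continuous_curry B I01 X F cF.
by [].
Qed.

Lemma precomp_cont (X : topologicalType) (phi : I01 -> I01) : continuous phi ->
  continuous (fun f : PathAmb X => ((f : I01 -> X) \o phi : PathAmb X)).
Proof.
move=> cphi f.
apply/compact_open_cvgP; first by apply: fmap_filter; exact: nbhs_filter.
move=> K O cK oO fKO.
have cK' : compact (phi @` K) by apply: continuous_compact => //; apply: continuous_subspaceT.
have : nbhs f [set g : PathAmb X | g @` (phi @` K) `<=` O].
  apply: open_nbhs_nbhs; split; first exact: compact_open_open.
  by move=> _ [_ [k Kk <-] <-]; apply: fKO; exists k.
apply: filterS => g gO _ [k Kk <-]; apply: gO; exists (phi k) => //; exists k.
Qed.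
Lemma revI_mem (t : I01) : (1 - val t : R) \in (`[0%R, 1%R]%classic : set R).
Proof.
case: t => /= x; rewrite !inE /= !in_itv /= => /andP[h0 h1].
by apply/andP; split; rewrite ?subr_ge0 // lerBlDr lerDl.
Qed.
Definition revI (t : I01) : I01 := @exist R _ _ (revI_mem t).
Lemma revI_cont : continuous revI.
Proof.
apply: (@continuous_comp_initial _ _ _ set_val) => t.
have -> : set_val \o revI = (fun x : R => 1 - x) \o set_val by [].
apply: continuous_comp; first exact: (@initial_continuous _ _ set_val t).
by apply: (@cvgB _ R^o); [exact: cvg_cst | exact: cvg_id].
Qed.
Lemma revI1 : revI i1 = i0.
Proof. by apply: val_inj => /=; exact: subrr. Qed.
Lemma revI0 : revI i0 = i1.
Proof. by apply: val_inj => /=; exact: subr0. Qed.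
Definition hsecT (X B : topologicalType) (k : nat)
    (E : set ('I_k.+1 -> PathAmb X)) (p : ('I_k.+1 -> PathAmb X) -> B) :=
  exists s : B -> 'I_k.+1 -> PathAmb X,
    (forall i, continuous (fun b => s b i)) /\
    (forall b, E (s b)) /\
    exists H : B * I01 -> B, continuous H /\
      (forall b, H (b, i0) = p (s b) /\ H (b, i1) = b).

Lemma secat0P (X B : topologicalType) (k : nat)
    (E : set ('I_k.+1 -> PathAmb X)) (p : ('I_k.+1 -> PathAmb X) -> B) :
  secat_le E p 0 <-> hsecT E p.
Proof.
split.
  move=> [V [_ [cov hs]]].
  have VT : V ord0 = setT.
    rewrite predeqE => b; split => // _.
    by have [j] := cov b; rewrite (ord1 j).
  have [s [cs [Es [H [cH hH]]]]] := hs ord0; rewrite VT in cs Es cH hH.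
  exists s; split; first by move=> i; apply/continuous_subspace_setT.
  split; first by move=> b; exact: Es.
  exists H; split; first by apply/continuous_subspace_setT; rewrite setXTT in cH.
  by move=> b; exact: hH.
move=> [s [cs [Es [H [cH hH]]]]].
exists (fun _ => setT); split; first by move=> _; exact: openT.
split; first by move=> b; exists ord0.
move=> j; exists s; split; first by move=> i; exact: (proj1 (continuous_subspace_setT _)).

split; first by move=> b _; exact: Es.
exists H; split; first by rewrite setXTT; exact: (proj1 (continuous_subspace_setT _)).
by move=> b _; exact: hH.
Qed.

Lemma catinf0P (G X : topologicalType) (A : Gspace G X) (x0 : X) :
  catinf_is A x0 0 <-> exists k, hsecT (@Pk_star G X A x0 k) (@qk X k).
Proof.
split.
  by move=> [[k [h _]] _]; exists k; apply/secat0P.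
move=> [k h]; split; last by [].
by exists k; split => //; apply/secat0P.
Qed.

Lemma TCinf0P (G X : topologicalType) (A : Gspace G X) :
  TCinf_is A 0 <-> exists k, hsecT (@Pk G X A k) (@pik X k).
Proof.
split.
  by move=> [[k [h _]] _]; exists k; apply/secat0P.
move=> [k h]; split; last by [].
by exists k; split => //; apply/secat0P.
Qed.

Section Orb.
Variables (G X : topologicalType) (A : Gspace G X).
Lemma so_refl x : same_orbit A x x.
Proof. by exists (gone A); rewrite act1. Qed.
Lemma so_sym x y : same_orbit A x y -> same_orbit A y x.
Proof.
move=> [g <-]; exists (ginv A g).
by rewrite -actM (proj1 (gmulV A g)) act1.
Qed.
Lemma orbit_inord k (g : 'I_k.+1 -> PathAmb X) : Pk A g -> forall j : nat, (j < k)%nat ->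
  same_orbit A ((g (inord j) : I01 -> X) i1) ((g (inord j.+1) : I01 -> X) i0).
Proof.
move=> [_ h] j jk; have := h (Ordinal jk).
have -> : widen_ord (leqnSn k) (Ordinal jk) = inord j.
  by apply: val_inj; rewrite /= inordK //; lia.
have -> : lift ord0 (Ordinal jk) = inord j.+1.
  by apply: val_inj; rewrite /= inordK //; lia.
by [].
Qed.
End Orb.

Lemma cont_pair (T U V : topologicalType) (f : T -> U) (g : T -> V) :
  continuous f -> continuous g -> continuous (fun z => (f z, g z)).
Proof. by move=> cf cg z; apply: cvg_pair; [exact: cf | exact: cg]. Qed.
Lemma cont_fst (U V : topologicalType) : continuous (@fst U V).
Proof. by move=> z; exact: cvg_fst. Qed.
Lemma cont_snd (U V : topologicalType) : continuous (@snd U V).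
Proof. by move=> z; exact: cvg_snd. Qed.
Lemma cont_comp (T U V : topologicalType) (f : T -> U) (g : U -> V) :
  continuous f -> continuous g -> continuous (fun x => g (f x)).
Proof. by move=> cf cg z; apply: continuous_comp; [exact: cf | exact: cg]. Qed.
Lemma tc_cat (G X : topologicalType) (A : Gspace G X) (x0 : X) k :
  hsecT (@Pk G X A k) (@pik X k) -> hsecT (@Pk_star G X A x0 k.+1) (@qk X k.+1).
Proof.
move=> [s [cs [Es [H [cH hH]]]]].
pose F := fun bt : X * I01 => (H ((x0, bt.1), revI bt.2)).1.
have cF : continuous F.
  apply: (@cont_comp _ _ _ (fun bt : X * I01 => H ((x0, bt.1), revI bt.2)) fst); last exact: cont_fst.
  apply: (@cont_comp _ _ _ (fun bt : X * I01 => ((x0, bt.1), revI bt.2)) H); last exact: cH.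
  apply: cont_pair; last by apply: (@cont_comp _ _ _ snd revI); [exact: cont_snd | exact: revI_cont].
  by apply: cont_pair; [move=> ?; exact: cvg_cst | exact: cont_fst].
have [cp0 pp0] := curry_path cF.
pose p0 := fun b => ((fun t => F (b, t)) : PathAmb X).
pose s' := fun b (i : 'I_k.+2) =>
  if val i is j.+1 then s (x0, b) (inord j) else p0 b.
have csx : forall i, continuous (fun b => s (x0, b) i).
  move=> i; apply: (@cont_comp _ _ _ (fun b : X => (x0, b)) (fun z => s z i)); last exact: cs.
  by apply: cont_pair; [move=> ?; exact: cvg_cst | move=> ?; exact: cvg_id].
exists s'; split.
  by case=> -[|j] hj /=; [exact: cp0 | exact: csx].
split.
  move=> b; split; last first.
    by rewrite /s' /= /p0 /F /= revI0; case: (hH (x0, b)) => _ ->.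
  split.
    case=> -[|j] hj /=; first exact: pp0.
    by case: (Es (x0, b)) => h _; exact: h.
  case=> -[|j] hj.
    have -> : lift ord0 (Ordinal hj) = inord 1 :> 'I_k.+2.
      by apply: val_inj; rewrite /= inordK.
    rewrite /s' /= inordK // /p0 /F /= revI1.
    have [-> _] := hH (x0, b).
    have -> : inord 0 = ord0 :> 'I_k.+1 by apply: val_inj; rewrite /= inordK.
    exact: so_refl.
  rewrite /s' /=.
  rewrite add0n.
  apply: orbit_inord; first exact: Es.
  lia.
exists (fun bt => (H ((x0, bt.1), bt.2)).2); split.
  apply: (@cont_comp _ _ _ (fun bt : X * I01 => H ((x0, bt.1), bt.2)) snd); last exact: cont_snd.
  apply: (@cont_comp _ _ _ (fun bt : X * I01 => ((x0, bt.1), bt.2)) H); last exact: cH.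
  apply: cont_pair; last exact: cont_snd.
  by apply: cont_pair; [move=> ?; exact: cvg_cst | exact: cont_fst].
move=> b; have [h0 h1] := hH (x0, b); rewrite /= h0 h1; split => //.
rewrite /qk /s' /=.
by have -> : inord k = ord_max :> 'I_k.+1 by apply: val_inj; rewrite /= inordK.
Qed.
Lemma cat_tc (G X : topologicalType) (A : Gspace G X) (x0 : X) k :
  hsecT (@Pk_star G X A x0 k) (@qk X k) -> hsecT (@Pk G X A (k + k.+1)) (@pik X (k + k.+1)).
Proof.
move=> [s [cs [Es [H [cH hH]]]]].
pose rv := fun f : PathAmb X => ((f : I01 -> X) \o revI : PathAmb X).
have crv : continuous rv := precomp_cont revI_cont.
pose sn := fun a (n : nat) => s a (inord n).
pose T := fun (ab : X * X) (i : 'I_(k + k.+1).+1) =>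
  if (val i <= k)%nat then rv (sn ab.1 (k - val i)%nat) else sn ab.2 (val i - k.+1)%nat.
exists T; split.
  move=> i; case hik: (val i <= k)%nat; rewrite /T hik.
    apply: (@cont_comp _ _ _ (fun ab : X * X => sn ab.1 (k - val i)%nat) rv) => //.
    apply: (@cont_comp _ _ _ fst (fun a => sn a (k - val i)%nat)); first exact: cont_fst.
    exact: cs.
  apply: (@cont_comp _ _ _ snd (fun a => sn a (val i - k.+1)%nat)); first exact: cont_snd.
  exact: cs.
have ordk : inord k = ord_max :> 'I_k.+1 by apply: val_inj; rewrite /= inordK.
have ord0k : inord 0 = ord0 :> 'I_k.+1 by apply: val_inj; rewrite /= inordK.
split.
  move=> [a b]; split.
    move=> i; case hik: (val i <= k)%nat; rewrite /T hik /=.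
      apply: (@cont_comp _ _ _ revI (sn a (k - val i)%nat)); first exact: revI_cont.
      by case: (Es a) => -[h _] _; exact: h.
    by case: (Es b) => -[h _] _; exact: h.
  move=> i /=; rewrite /T /= /bump leq0n add1n.
  have [Pa xa] := Es a; have [Pb xb] := Es b.
  have ik : (nat_of_ord i < k + k.+1)%nat := ltn_ord i.
  case: (ltngtP (nat_of_ord i) k) => hik.
  - rewrite /rv /= revI1 revI0.
    have -> : (k - nat_of_ord i = (k - (nat_of_ord i).+1).+1)%nat by lia.
    apply: so_sym; apply: orbit_inord => //; lia.
  - have -> : ((nat_of_ord i).+1 - k.+1 = (nat_of_ord i - k.+1).+1)%nat by lia.
    apply: orbit_inord => //; lia.
  - rewrite hik subnn /rv /= revI1 /sn ord0k xa.
    have -> : (k.+1 - k.+1 = 0)%nat by lia.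
    rewrite ord0k xb; exact: so_refl.
exists (fun abt : (X * X) * I01 => (H (abt.1.1, abt.2), H (abt.1.2, abt.2))); split.
  apply: cont_pair.
    apply: (@cont_comp _ _ _ (fun abt : (X * X) * I01 => (abt.1.1, abt.2)) H) => //.
    apply: cont_pair; last exact: cont_snd.
    exact: (@cont_comp _ _ _ fst fst (@cont_fst _ _) (@cont_fst _ _)).
  apply: (@cont_comp _ _ _ (fun abt : (X * X) * I01 => (abt.1.2, abt.2)) H) => //.
  apply: cont_pair; last exact: cont_snd.
  exact: (@cont_comp _ _ _ fst snd (@cont_fst _ _) (@cont_snd _ _)).
move=> [a b] /=; have [ha0 ha1] := hH a; have [hb0 hb1] := hH b.
rewrite ha1 hb1; split => //.
rewrite ha0 hb0 /pik /qk /T /=.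
have -> : (k + k.+1 <= k)%nat = false by lia.
rewrite subn0 /rv /= revI0 /sn.
have -> : (k + k.+1 - k.+1 = k)%nat by lia.
by rewrite ordk.
Qed.

Theorem mainTheorem7 (G X : topologicalType) (A : Gspace G X) (x0 : X) :
  catinf_is A x0 0 <-> TCinf_is A 0.
Proof.
rewrite catinf0P TCinf0P; split.
  by move=> [k h]; exists (k + k.+1)%nat; exact: cat_tc h.
by move=> [k h]; exists k.+1; exact: tc_cat h.
Qed.
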